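(* Let $\mu$ be the uniform probability measure on $\{-1,1\}^n$ and let $\nu=e^f d\mu$ be a probability measure on $\{-1,1\}^n$ (with $f:\{-1,1\}^n\to\mathbb{R}$). Let $$\mathcal{I}(\nu)=\int I\big(\nabla\Lambda_\mu(\nabla f(x))\big)\,d\nu(x),$$ where $\nabla f$ is the discrete gradient of $f$. Then $$\mathcal{I}(\nu)\le H(\nu|\mu)+\kappa\int\sup_{y\in\{-1,1\}^n}\langle\nabla f(y),x\rangle\,d\mu(x),$$ where $\kappa$ is a universal constant.
   Context: Discrete gradient: $\nabla f(x)=(\partial_1f(x),\dots,\partial_nf(x))$ with $\partial_if(x)=\frac12(f(x_+)-f(x_-))$, where $x_\pm$ is $x$ with $i$-th coordinate replaced by $\pm1$. $\Lambda_\mu(\xi)=\log\int e^{\langle\xi,x\rangle}d\mu(x)=\sum_i\log\cosh\xi_i$, so $\nabla\Lambda_\mu(\xi)=(\tanh\xi_1,\dots,\tanh\xi_n)$. $I(x)=\sum_{i=1}^n\big(\frac{1+x_i}{2}\log(1+x_i)+\frac{1-x_i}{2}\log(1-x_i)\big)$ on $[-1,1]^n$. $H(\nu|\mu)$ is the relative entropy. *)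

(* Defs.v *)
From mathcomp Require Import all_boot all_order all_algebra.
From mathcomp Require Import all_classical all_reals.
From mathcomp Require Import all_analysis.
Set Implicit Arguments. Unset Strict Implicit. Unset Printing Implicit Defensive.
Import Order.TTheory GRing.Theory Num.Theory.
Local Open Scope ring_scope.

(* The discrete cube {-1,1}^n, a point encoded by its sign pattern. *)
Definition cube (n : nat) := {ffun 'I_n -> bool}.

Section Cube.
Variable R : realType.
Variable n : nat.

Definition coord (x : cube n) (i : 'I_n) : R := if x i then 1 else -1.

Definition inner (u : 'I_n -> R) (x : cube n) : R := \sum_i u i * coord x i.

Definition setc (x : cube n) (i : 'I_n) (b : bool) : cube n :=
  [ffun j => if j == i then b else x j].

Definition dpart (f : cube n -> R) (i : 'I_n) (x : cube n) : R :=
  (f (setc x i true) - f (setc x i false)) / 2.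
Definition dgrad (f : cube n -> R) (x : cube n) : 'I_n -> R :=
  fun i => dpart f i x.

Definition mu_int (g : cube n -> R) : R := (2 ^+ n)^-1 * \sum_x g x.

Definition nu_int (f : cube n -> R) (g : cube n -> R) : R :=
  mu_int (fun x => expR (f x) * g x).

(* relative entropy H(nu|mu) = int log(dnu/dmu) dnu *)
Definition relent (f : cube n -> R) : R := nu_int f f.

Definition tanh (t : R) : R := (expR t - expR (- t)) / (expR t + expR (- t)).

Definition gradLambda (xi : 'I_n -> R) : 'I_n -> R := fun i => tanh (xi i).

Definition I1 (t : R) : R := (1 + t) / 2 * ln (1 + t) + (1 - t) / 2 * ln (1 - t).
Definition Ient (u : 'I_n -> R) : R := \sum_i I1 (u i).

Definition calI (f : cube n -> R) : R :=
  nu_int f (fun x => Ient (gradLambda (dgrad f x))).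

Definition supcube (g : cube n -> R) : R :=
  \big[Num.max/g [ffun => true]]_(y : cube n) g y.

Definition gauss_width (f : cube n -> R) : R :=
  mu_int (fun x => supcube (fun y => inner (dgrad f y) x)).

End Cube.

(* Main.v *)
Require Import Defs.
From mathcomp Require Import all_boot all_order all_algebra.
From mathcomp Require Import all_classical all_reals.
From mathcomp Require Import all_analysis.
From mathcomp Require Import ring lra.
Import Order.TTheory GRing.Theory Num.Theory.
Set Implicit Arguments. Unset Strict Implicit. Unset Printing Implicit Defensive.
Local Open Scope ring_scope.

Section Helpers.
Variable R : realType.

Lemma supcube_ge m (g : cube m -> R) y : g y <= supcube g.
Proof.
rewrite /supcube; have : y \in index_enum (cube m) by rewrite mem_index_enum.
elim: (index_enum _) => [|z s IH] //=.
rewrite big_cons in_cons => /orP [/eqP -> | /IH h].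
- by rewrite le_max lexx.
- by rewrite le_max h orbT.
Qed.

Lemma supcube_ex m (g : cube m -> R) : exists y, supcube g = g y.
Proof.
rewrite /supcube; elim: (index_enum _) => [|z s [y IH]] /=.
  by rewrite big_nil; exists [ffun => true].
rewrite big_cons IH /Num.max /Order.max; case: ifP => _.
  by exists y.
by exists z.
Qed.

Lemma supcube_le m (g : cube m -> R) C : (forall y, g y <= C) -> supcube g <= C.
Proof. by move=> h; have [y ->] := supcube_ex g. Qed.

Lemma card_cube n : #|cube n| = (2 ^ n)%N.
Proof. by rewrite card_ffun card_bool card_ord. Qed.

Lemma two_pow_gt0 n : 0 < (2 ^+ n : R).
Proof. by rewrite exprn_gt0. Qed.

Lemma mu_int_ext n (F G : cube n -> R) : (forall x, F x = G x) -> mu_int F = mu_int G.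
Proof. by move=> h; rewrite /mu_int; congr (_ * _); apply: eq_bigr => x _; rewrite h. Qed.

Lemma mu_int_le n (F G : cube n -> R) : (forall x, F x <= G x) -> mu_int F <= mu_int G.
Proof.
move=> h; rewrite /mu_int; apply: ler_wpM2l; first by rewrite invr_ge0 ltW ?two_pow_gt0.
by apply: ler_sum => x _.
Qed.

Lemma mu_int_cst n (C : R) : mu_int (fun _ : cube n => C) = C.
Proof.
rewrite /mu_int sumr_const card_cube -[C *+ _]mulr_natl natrX mulrA mulVf ?mul1r // gt_eqF // two_pow_gt0.
Qed.

Lemma mu_int_lin3 n (F G H : cube n -> R) a b c :
  mu_int (fun x => a * F x + b * G x + c * H x) = a * mu_int F + b * mu_int G + c * mu_int H.
Proof.
rewrite /mu_int !big_split /= -!mulr_sumr; ring.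
Qed.

Lemma mu_int_gt0 n (F : cube n -> R) : (forall x, 0 < F x) -> 0 < mu_int F.
Proof.
move=> h; rewrite /mu_int mulr_gt0 ?invr_gt0 ?two_pow_gt0 //.
rewrite (bigD1 [ffun => true]) //=.
have h1 := h [ffun => true].
have h2 : 0 <= \sum_(i | i != [ffun => true]) F i by apply: sumr_ge0 => i _; apply: ltW.
lra.
Qed.

Definition consc n (b : bool) (x : cube n) : cube n.+1 :=
  [ffun i => if unlift ord0 i is Some j then x j else b].

Lemma sum_cubeS n (F : cube n.+1 -> R) :
  \sum_(x : cube n.+1) F x = \sum_(x : cube n) F (consc true x) + \sum_(x : cube n) F (consc false x).
Proof.
rewrite (reindex (fun p : bool * cube n => consc p.1 p.2)) /=.
  rewrite -(pair_big predT predT (fun b x => F (consc b x))) /=.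
  by rewrite big_bool.
exists (fun x : cube n.+1 => (x ord0, [ffun j => x (lift ord0 j)])) => [[b x]|x] _ /=.
  rewrite !ffunE unlift_none; congr (_, _); apply/ffunP => j.
  by rewrite !ffunE liftK.
apply/ffunP => i; rewrite !ffunE; case: unliftP => [j ->|->] //.
by rewrite ffunE.
Qed.

Lemma mu_intS n (F : cube n.+1 -> R) :
  mu_int F = (mu_int (fun x => F (consc true x)) + mu_int (fun x => F (consc false x))) / 2.
Proof.
rewrite /mu_int sum_cubeS exprS invfM.
by rewrite mulrDr; ring.
Qed.


Definition Lc (t : R) : R := ln ((expR t + expR (- t)) / 2).

Lemma C_gt0 (t : R) : 0 < (expR t + expR (- t)) / 2.
Proof. by rewrite divr_gt0 // addr_gt0 // expR_gt0. Qed.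

Lemma expR_subLc a t : expR (a - Lc t) = expR a / ((expR t + expR (- t)) / 2).
Proof. by rewrite expRD expRN /Lc lnK // posrE C_gt0. Qed.

Lemma sum_bound (p q M e : R) : 0 < M -> 0 <= p -> p <= M -> 0 <= q -> q <= M ->
  p * q <= M * M * e -> p + q <= M * (1 + e).
Proof.
move=> hM hp hpM hq hqM hpq.
have h' : M * (p + q) <= M * (M * (1 + e)).
  have h2 : 0 <= (M - p) * (M - q) by apply: mulr_ge0; lra.
  nra.
by rewrite ler_pM2l in h'.
Qed.

Lemma final_comb (p q M a c e : R) : 0 <= a -> 0 <= c -> 0 <= p -> p <= M -> 0 <= q -> q <= M ->
  p + q <= M * (1 + e) -> a + c * e <= 1 -> a * e + c <= 1 -> p * a + q * c <= M.
Proof.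
move=> ha hc hp hpM hq hqM hs h1 h2.
have [hac|hac] := leP c a.
  have k1 : 0 <= (a - c) * (M - p) by apply: mulr_ge0; lra.
  have k2 : 0 <= c * (M * (1 + e) - p - q) by apply: mulr_ge0; lra.
  have k3 : 0 <= M * (1 - a - c * e) by apply: mulr_ge0; lra.
  nra.
have k1 : 0 <= (c - a) * (M - q) by apply: mulr_ge0; lra.
have k2 : 0 <= a * (M * (1 + e) - p - q) by apply: mulr_ge0; lra.
have k3 : 0 <= M * (1 - a * e - c) by apply: mulr_ge0; lra.
nra.
Qed.

Lemma core_alg (p q M A B : R) : 0 < M -> 0 <= p -> 0 <= q -> 0 < A -> 0 < B ->
  p * p <= M * M -> q * q <= M * M -> p * q * A <= M * M * B -> p * q * B <= M * M * A ->
  p * (A / (A + 1)) + q * (1 / (B + 1)) <= M.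
Proof.
move=> hM hp hq hA hB h1 h2 h3 h4.
have hpM : p <= M by nra.
have hqM : q <= M by nra.
have hA1 : A + 1 != 0 by rewrite gt_eqF //; lra.
have hB1 : B + 1 != 0 by rewrite gt_eqF //; lra.
have hA0 : A != 0 by rewrite gt_eqF.
have hB0 : B != 0 by rewrite gt_eqF.
have ha : 0 <= A / (A + 1) by rewrite divr_ge0 //; lra.
have hc : 0 <= 1 / (B + 1) by rewrite divr_ge0 //; lra.
have [hAB|hAB] := leP B A.
  apply: (final_comb (e := B / A)) => //.
  - apply: sum_bound => //.
    rewrite mulrA ler_pdivlMr //; nra.
  - rewrite -subr_ge0.
    have -> : 1 - (A / (A + 1) + 1 / (B + 1) * (B / A)) = (A - B) / ((A + 1) * (B + 1) * A) by field; rewrite ?hA0 ?hB0 ?hA1 ?hB1.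
    by rewrite divr_ge0 //; [lra| apply: mulr_ge0; [apply: mulr_ge0|]; lra].
  - rewrite -subr_ge0.
    have -> : 1 - (A / (A + 1) * (B / A) + 1 / (B + 1)) = B * (A - B) / ((A + 1) * (B + 1)) by field; rewrite ?hA0 ?hB0 ?hA1 ?hB1.
    by rewrite divr_ge0 //; [apply: mulr_ge0; lra | apply: mulr_ge0; lra].
apply: (final_comb (e := A / B)) => //.
- apply: sum_bound => //.
  rewrite mulrA ler_pdivlMr //; nra.
- rewrite -subr_ge0.
  have -> : 1 - (A / (A + 1) + 1 / (B + 1) * (A / B)) = (B - A) * (B + A + 1) / (B * (A + 1) * (B + 1)) by field; rewrite ?hA0 ?hB0 ?hA1 ?hB1.
  by rewrite divr_ge0 //; [apply: mulr_ge0; lra | apply: mulr_ge0; [apply: mulr_ge0|]; lra].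
- rewrite -subr_ge0.
  have -> : 1 - (A / (A + 1) * (A / B) + 1 / (B + 1)) = (B - A) * (A * B + A + B) / (B * (A + 1) * (B + 1)) by field; rewrite ?hA0 ?hB0 ?hA1 ?hB1.
  by rewrite divr_ge0 //; [apply: mulr_ge0; nra | apply: mulr_ge0; [apply: mulr_ge0|]; lra].
Qed.


Lemma expM_le (a b P Q : R) : a <= P -> b <= Q -> expR a * expR b <= expR P * expR Q.
Proof.
move=> h1 h2; apply: ler_pM.
- exact: ltW (expR_gt0 _).
- exact: ltW (expR_gt0 _).
- by rewrite ler_expR.
- by rewrite ler_expR.
Qed.

Lemma base_ineq (u1 u2 t1 t2 P Q k1 k2 : R) :
  u1 + 2 * t1 <= P -> u2 + 2 * t2 <= P -> u1 - 2 * t1 <= Q -> u2 - 2 * t2 <= Q ->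
  k1 = u1 + t1 - Lc t1 -> k2 = u2 - t2 - Lc t2 ->
  ln ((expR k1 + expR k2) / 2) <= (P + Q) / 2.
Proof.
move=> h1 h2 h3 h4 -> ->.
rewrite !expR_subLc.
have -> : (P + Q) / 2 = ln (expR ((P + Q) / 2)) by rewrite expRK.
have hMM : expR ((P + Q) / 2) * expR ((P + Q) / 2) = expR P * expR Q.
  by rewrite -!expRD; congr expR; lra.
set M := expR ((P + Q) / 2) in hMM *.
have hM : 0 < M by rewrite expR_gt0.
have e1 : expR (u1 + t1) = expR u1 * expR t1 by rewrite expRD.
have e2 : expR (u2 - t2) = expR u2 * (expR t2)^-1 by rewrite expRD expRN.
have hpp : expR u1 * expR u1 = expR (u1 + 2 * t1) * expR (u1 - 2 * t1).
  by rewrite -!expRD; congr expR; ring.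
have hqq : expR u2 * expR u2 = expR (u2 + 2 * t2) * expR (u2 - 2 * t2).
  by rewrite -!expRD; congr expR; ring.
have hpq1 : expR u1 * expR u2 * (expR t1 * expR t1) = expR (u1 + 2 * t1) * expR (u2 - 2 * t2) * (expR t2 * expR t2).
  by rewrite -!expRD; congr expR; ring.
have hpq2 : expR u1 * expR u2 * (expR t2 * expR t2) = expR (u2 + 2 * t2) * expR (u1 - 2 * t1) * (expR t1 * expR t1).
  by rewrite -!expRD; congr expR; ring.
rewrite e1 e2 !expRN.
set p := expR u1 in e1 hpp hpq1 hpq2 *.
set q := expR u2 in e2 hqq hpq1 hpq2 *.
set X := expR t1 in e1 hpq1 hpq2 *.
set Y := expR t2 in e2 hpq1 hpq2 *.
have hp : 0 < p by rewrite expR_gt0.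
have hq : 0 < q by rewrite expR_gt0.
have hX : 0 < X by rewrite expR_gt0.
have hY : 0 < Y by rewrite expR_gt0.
have hX0 : X != 0 by rewrite gt_eqF.
have hY0 : Y != 0 by rewrite gt_eqF.
have hXX : X * X + 1 != 0 by rewrite gt_eqF // addr_gt0 // mulr_gt0.
have hYY : Y * Y + 1 != 0 by rewrite gt_eqF // addr_gt0 // mulr_gt0.
have hX1 : X + X^-1 != 0 by rewrite gt_eqF // addr_gt0 // invr_gt0.
have hY1 : Y + Y^-1 != 0 by rewrite gt_eqF // addr_gt0 // invr_gt0.
have -> : (p * X / ((X + X^-1) / 2) + q * Y^-1 / ((Y + Y^-1) / 2)) / 2
    = p * ((X * X) / (X * X + 1)) + q * (1 / (Y * Y + 1)).
  by field; rewrite ?hX0 ?hY0 ?hXX ?hYY ?hX1 ?hY1.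
rewrite ler_ln ?posrE //; last first.
  by rewrite addr_gt0 // mulr_gt0 // divr_gt0 // ?mulr_gt0 // addr_gt0 // ?mulr_gt0.
apply: core_alg.
- done.
- exact: ltW.
- exact: ltW.
- by rewrite mulr_gt0.
- by rewrite mulr_gt0.
- by rewrite hpp hMM; apply: expM_le.
- by rewrite hqq hMM; apply: expM_le.
- rewrite hpq1 hMM; apply: ler_wpM2r; first by rewrite ltW ?mulr_gt0.
  exact: expM_le.
- rewrite hpq2 hMM; apply: ler_wpM2r; first by rewrite ltW ?mulr_gt0.
  exact: expM_le.
Qed.

Lemma tangent (a b a' b' : R) :
  ln ((expR a + expR b) / 2) + expR a / (expR a + expR b) * (a' - a)
    + expR b / (expR a + expR b) * (b' - b) <= ln ((expR a' + expR b') / 2).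
Proof.
set ea := expR a; set eb := expR b; set S := ea + eb.
have hea : 0 < ea by rewrite expR_gt0.
have heb : 0 < eb by rewrite expR_gt0.
have hS : 0 < S by rewrite addr_gt0.
have hS0 : S != 0 by rewrite gt_eqF.
set m := ea / S * (a' - a) + eb / S * (b' - b).
have hm : ea * (a' - a) + eb * (b' - b) = S * m by rewrite /m; field; rewrite ?hS0.
set E := expR m.
have hE : 0 < E by rewrite expR_gt0.
have ea' : expR a' = ea * E * expR (a' - a - m) by rewrite /ea /E -!expRD; congr expR; ring.
have eb' : expR b' = eb * E * expR (b' - b - m) by rewrite /eb /E -!expRD; congr expR; ring.
have H1 : ea * E * (1 + (a' - a - m)) <= expR a'.
  by rewrite ea'; apply: ler_wpM2l; [rewrite ltW ?mulr_gt0 | apply: expR_ge1Dx].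
have H2 : eb * E * (1 + (b' - b - m)) <= expR b'.
  by rewrite eb'; apply: ler_wpM2l; [rewrite ltW ?mulr_gt0 | apply: expR_ge1Dx].
have eq : ea * E * (1 + (a' - a - m)) + eb * E * (1 + (b' - b - m))
    = S * E + E * (ea * (a' - a) + eb * (b' - b) - S * m) by rewrite /S; ring.
rewrite hm subrr mulr0 addr0 in eq.
have key : S * E <= expR a' + expR b' by rewrite -eq; apply: lerD.
rewrite -addrA -/m.
have -> : ln (S / 2) + m = ln (S / 2 * E).
  rewrite [ln (S / 2 * E)]lnM; first by rewrite /E expRK.
  - by rewrite posrE divr_gt0.
  - by rewrite posrE.
rewrite ler_ln ?posrE ?mulr_gt0 ?divr_gt0 ?addr_gt0 ?expR_gt0 //.
by rewrite mulrAC ler_pM2r.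
Qed.


Definition Lam n (u : 'I_n -> R) : R := \sum_i Lc (u i).

Lemma innerS n (u : 'I_n.+1 -> R) b (x : cube n) :
  inner u (consc b x) = u ord0 * (if b then 1 else -1) + inner (fun j => u (lift ord0 j)) x.
Proof.
rewrite /inner big_ord_recl /Defs.coord !ffunE unlift_none; congr (_ + _).
by apply: eq_bigr => j _; rewrite ffunE liftK.
Qed.

Lemma LamS n (u : 'I_n.+1 -> R) : Lam u = Lc (u ord0) + Lam (fun j => u (lift ord0 j)).
Proof. by rewrite /Lam big_ord_recl. Qed.

Definition sg (b : bool) : R := if b then 1 else -1.

Definition tl m n (th : cube m -> 'I_n.+1 -> R) : cube m -> 'I_n -> R :=
  fun y j => th y (lift ord0 j).
Definition cs m n (th : cube m -> 'I_n.+1 -> R) (c : cube m -> R) (s : bool) : cube m -> R :=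
  fun y => c y + th y ord0 * sg s - Lc (th y ord0).

Definition Gf m n (th : cube m -> 'I_n -> R) (c : cube m -> R) : cube n -> R :=
  fun x => expR (supcube (fun y => inner (th y) x - Lam (th y) + c y)).
Definition Kf m n (th : cube m -> 'I_n -> R) (c : cube m -> R) (k : R) : cube n -> R :=
  fun x => supcube (fun y => k * inner (th y) x + c y).

Lemma innerT m n (th : cube m -> 'I_n.+1 -> R) y x :
  inner (th y) (consc true x) = th y ord0 + inner (tl th y) x.
Proof. by rewrite innerS mulr1. Qed.

Lemma innerF m n (th : cube m -> 'I_n.+1 -> R) y x :
  inner (th y) (consc false x) = - th y ord0 + inner (tl th y) x.
Proof. by rewrite innerS mulrN1. Qed.

Lemma core m n (th : cube m -> 'I_n -> R) (c : cube m -> R) :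
  ln (mu_int (Gf th c)) <= mu_int (Kf th c 2).
Proof.
elim: n th c => [|n IH] th c.
  have E1 : forall x : cube 0, Gf th c x = expR (supcube c).
    move=> x; rewrite /Gf; congr (expR (supcube _)); apply: funext => y.
    by rewrite /inner /Lam !big_ord0 subr0 add0r.
  have E2 : forall x : cube 0, Kf th c 2 x = supcube c.
    move=> x; rewrite /Kf; congr (supcube _); apply: funext => y.
    by rewrite /inner !big_ord0 mulr0 add0r.
  by rewrite (mu_int_ext E1) (mu_int_ext E2) !mu_int_cst expRK.
have EG : forall s (x : cube n), Gf th c (consc s x) = Gf (tl th) (cs th c s) x.
  move=> s x; rewrite /Gf; congr (expR (supcube _)); apply: funext => y.
  rewrite innerS LamS /tl /cs /sg; ring.
have L1 : forall s, mu_int (fun x => Gf th c (consc s x)) = mu_int (Gf (tl th) (cs th c s)).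
  by move=> s; apply: mu_int_ext => x; rewrite EG.
rewrite (mu_intS (Gf th c)) (L1 true) (L1 false).
have hG : forall s, mu_int (Gf (tl th) (cs th c s)) <= expR (mu_int (Kf (tl th) (cs th c s) 2)).
  move=> s; have := IH (tl th) (cs th c s).
  rewrite -ler_expR lnK // posrE; apply: mu_int_gt0 => x; exact: expR_gt0.
set a := mu_int (Kf (tl th) (cs th c true) 2).
set b := mu_int (Kf (tl th) (cs th c false) 2).
have hGpos : forall s, 0 < mu_int (Gf (tl th) (cs th c s)).
  by move=> s; apply: mu_int_gt0 => x; exact: expR_gt0.
apply: le_trans (_ : _ <= ln ((expR a + expR b) / 2)) _.
  rewrite ler_ln ?posrE; last 2 first.
  - by rewrite divr_gt0 // addr_gt0.
  - by rewrite divr_gt0 // addr_gt0 // expR_gt0.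
  by apply: ler_wpM2r; [rewrite invr_ge0 ler0n | apply: lerD; apply: hG].
pose Kp := Kf (tl th) (cs th c true) 2.
pose Km := Kf (tl th) (cs th c false) 2.
pose w := expR a / (expR a + expR b).
pose v := expR b / (expR a + expR b).
pose C := ln ((expR a + expR b) / 2) - w * a - v * b.
have eqC : ln ((expR a + expR b) / 2) = mu_int (fun x => 1 * (fun _ => C) x + w * Kp x + v * Km x).
  rewrite (mu_int_lin3 (fun _ => C) Kp Km 1 w v) mu_int_cst /C -/a -/b; ring.
rewrite eqC.
apply: le_trans (_ : _ <= mu_int (fun x => ln ((expR (Kp x) + expR (Km x)) / 2))) _.
  apply: mu_int_le => x /=.
  have := tangent a b (Kp x) (Km x).
  rewrite -/w -/v /C; lra.
pose P := fun x => Kf th c 2 (consc true x).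
pose Q := fun x => Kf th c 2 (consc false x).
apply: le_trans (_ : _ <= mu_int (fun x => (1/2) * P x + (1/2) * Q x + 0 * P x)) _; last first.
  rewrite (mu_int_lin3 P Q P (1/2) (1/2) 0) (mu_intS (Kf th c 2)) -/P -/Q /=; lra.
apply: mu_int_le => x.
have [y1 hy1] : exists y1, Kp x = 2 * inner (tl th y1) x + cs th c true y1 := supcube_ex _.
have [y2 hy2] : exists y2, Km x = 2 * inner (tl th y2) x + cs th c false y2 := supcube_ex _.
have P1 : 2 * inner (th y1) (consc true x) + c y1 <= P x := supcube_ge _ y1.
have P2 : 2 * inner (th y2) (consc true x) + c y2 <= P x := supcube_ge _ y2.
have Q1 : 2 * inner (th y1) (consc false x) + c y1 <= Q x := supcube_ge _ y1.
have Q2 : 2 * inner (th y2) (consc false x) + c y2 <= Q x := supcube_ge _ y2.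
rewrite !innerT in P1 P2; rewrite !innerF in Q1 Q2.
have := base_ineq (u1 := 2 * inner (tl th y1) x + c y1) (t1 := th y1 ord0)
  (u2 := 2 * inner (tl th y2) x + c y2) (t2 := th y2 ord0) (P := P x) (Q := Q x)
  (k1 := Kp x) (k2 := Km x).
rewrite hy1 hy2 /cs /sg.
move=> H.
have hh := H ltac:(lra) ltac:(lra) ltac:(lra) ltac:(lra) ltac:(ring) ltac:(ring).
by apply: le_trans hh _; lra.
Qed.


Lemma mu_intZ n (F : cube n -> R) k : mu_int (fun x => k * F x) = k * mu_int F.
Proof. by rewrite /mu_int -mulr_sumr; ring. Qed.

Lemma I1_tanh (s : R) : I1 (tanh s) = s * tanh s - Lc s.
Proof.
have hE := expR_gt0 s; have hEi := expR_gt0 (- s).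
have hC := C_gt0 s.
have hS : expR s + expR (- s) != 0 by rewrite gt_eqF // addr_gt0.
have e1 : 1 + tanh s = expR s * ((expR s + expR (- s)) / 2)^-1.
  by rewrite /tanh; field; rewrite ?hS.
have e2 : 1 - tanh s = expR (- s) * ((expR s + expR (- s)) / 2)^-1.
  by rewrite /tanh; field; rewrite ?hS.
have l1 : ln (1 + tanh s) = s - Lc s.
  by rewrite e1 lnM ?posrE ?invr_gt0 // lnV ?posrE // expRK.
have l2 : ln (1 - tanh s) = - s - Lc s.
  by rewrite e2 lnM ?posrE ?invr_gt0 // lnV ?posrE // expRK.
by rewrite /I1 l1 l2; field.
Qed.

Lemma tanh_pair (a b : R) :
  expR a * (1 - tanh ((a - b) / 2)) = expR b * (1 + tanh ((a - b) / 2)).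
Proof.
set d := (a - b) / 2.
have hE := expR_gt0 d.
have hEa : expR a = expR b * expR d * expR d by rewrite -!expRD /d; congr expR; field.
have hS : expR d + expR (- d) != 0 by rewrite gt_eqF // addr_gt0 // expR_gt0.
rewrite /tanh hEa expRN.
have hE0 : expR d != 0 by rewrite gt_eqF.
have hS' : expR d + (expR d)^-1 != 0 by rewrite -expRN.
have hdd : expR d * expR d + 1 != 0 by rewrite gt_eqF // addr_gt0 // mulr_gt0.
by field; rewrite ?hdd ?hE0.
Qed.

Lemma sum_flip_zero n (i : 'I_n) (h : cube n -> R) :
  (forall x, h x + h (setc x i (~~ x i)) = 0) -> \sum_x h x = 0.
Proof.
move=> hp.
have flipK : involutive (fun x : cube n => setc x i (~~ x i)).
  move=> x; apply/ffunP => j; rewrite !ffunE.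
  by case: eqP => [->|]; rewrite ?eqxx ?negbK.
have E : \sum_x h x = \sum_x h (setc x i (~~ x i)).
  by rewrite (reindex_inj (inv_inj flipK)).
have e : \sum_x h x + \sum_x h x = 0.
  by rewrite {2}E -big_split big1 // => x _; exact: hp.
lra.
Qed.

Lemma setc_flip n (x : cube n) i b : setc (setc x i (~~ x i)) i b = setc x i b.
Proof. by apply/ffunP => j; rewrite !ffunE; case: (j == i). Qed.

Lemma setc_id n (x : cube n) i : setc x i (x i) = x.
Proof. by apply/ffunP => j; rewrite !ffunE; case: eqP => [->|]. Qed.

Lemma coord_zero n (f : cube n -> R) (i : 'I_n) :
  \sum_x expR (f x) * (dpart f i x * (Defs.coord R x i - tanh (dpart f i x))) = 0.
Proof.
apply: (@sum_flip_zero n i (fun x => expR (f x) * (dpart f i x * (Defs.coord R x i - tanh (dpart f i x))))) => x /=.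
have hd : dpart f i (setc x i (~~ x i)) = dpart f i x by rewrite /dpart !setc_flip.
rewrite hd /Defs.coord ffunE eqxx.
case hx : (x i) => /=.
  have e1 : f x = f (setc x i true) by rewrite -{1}(setc_id x i) hx.
  have := tanh_pair (f (setc x i true)) (f (setc x i false)).
  rewrite /dpart e1 -/(dpart f i x) => h.
  have -> : expR (f (setc x i true)) * (dpart f i x * (1 - tanh (dpart f i x))) =
    dpart f i x * (expR (f (setc x i true)) * (1 - tanh (dpart f i x))) by ring.
  rewrite h; ring.
have e1 : f x = f (setc x i false) by rewrite -{1}(setc_id x i) hx.
have := tanh_pair (f (setc x i true)) (f (setc x i false)).
rewrite /dpart e1 -/(dpart f i x) => h.
have -> : expR (f (setc x i true)) * (dpart f i x * (1 - tanh (dpart f i x))) =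
  dpart f i x * (expR (f (setc x i true)) * (1 - tanh (dpart f i x))) by ring.
rewrite h; ring.
Qed.


Lemma calI_eq n (f : cube n -> R) :
  calI f = nu_int f (fun x => inner (dgrad f x) x - Lam (dgrad f x)).
Proof.
rewrite /calI /nu_int /mu_int; congr (_ * _); apply/eqP; rewrite -subr_eq0 -sumrB.
have pt : forall x, expR (f x) * Ient (gradLambda (dgrad f x)) -
    expR (f x) * (inner (dgrad f x) x - Lam (dgrad f x)) =
    - \sum_i expR (f x) * (dpart f i x * (Defs.coord R x i - tanh (dpart f i x))).
  move=> x; rewrite /Ient /gradLambda /dgrad /inner /Lam -sumrB -mulrBr -sumrB mulr_sumr -sumrN.
  apply: eq_bigr => i _; rewrite I1_tanh; ring.
rewrite (eq_bigr _ (fun x _ => pt x)) sumrN exchange_big /=.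
by rewrite big1 ?oppr0 // => i _; apply: coord_zero.
Qed.

Lemma gibbs n (f g : cube n -> R) : mu_int (fun x => expR (f x)) = 1 ->
  nu_int f g <= nu_int f f + ln (mu_int (fun x => expR (g x))).
Proof.
move=> hf.
set Z := mu_int (fun x => expR (g x)).
have hZ : 0 < Z by apply: mu_int_gt0 => x; exact: expR_gt0.
have pt : forall x, expR (f x) * g x <=
    1 * (expR (f x) * f x) + (ln Z - 1) * expR (f x) + Z^-1 * expR (g x).
  move=> x.
  have hfx := expR_gt0 (f x).
  have h := ler_wpM2l (ltW hfx) (expR_ge1Dx (g x - f x - ln Z)).
  have eq : expR (f x) * expR (g x - f x - ln Z) = Z^-1 * expR (g x).
    rewrite expRD expRD !expRN lnK ?posrE //.
    have hf0 : expR (f x) != 0 by rewrite gt_eqF.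
    have hZ0 : Z != 0 by rewrite gt_eqF.
    by field; rewrite ?hf0 ?hZ0.
  rewrite eq in h; nra.
rewrite /nu_int.
apply: le_trans (mu_int_le (F := fun x => expR (f x) * g x)
  (G := fun x => 1 * (expR (f x) * f x) + (ln Z - 1) * expR (f x) + Z^-1 * expR (g x)) pt) _.
rewrite (mu_int_lin3 (fun x => expR (f x) * f x) (fun x => expR (f x)) (fun x => expR (g x)) 1 (ln Z - 1) Z^-1).
rewrite hf -/Z mulVf ?gt_eqF //; lra.
Qed.

End Helpers.

Theorem proposition2p14 (R : realType) :
  exists kappa : R, 0 < kappa /\
    forall (n : nat) (f : cube n -> R),
      mu_int (fun x => expR (f x)) = 1 ->
      calI f <= relent f + kappa * gauss_width f.
Proof.
exists 2; split; first by lra.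
move=> n f hf.
pose G := fun x : cube n => supcube (fun y => inner (dgrad f y) x - Lam (dgrad f y) + 0).
have h1 := calI_eq f.
have h2 : nu_int f (fun x => inner (dgrad f x) x - Lam (dgrad f x)) <= nu_int f G.
  rewrite /nu_int; apply: mu_int_le => x; apply: ler_wpM2l; first exact: ltW (expR_gt0 _).
  have := supcube_ge (fun y => inner (dgrad f y) x - Lam (dgrad f y) + 0) x.
  by rewrite /= addr0.
have h3 := gibbs G hf.
have h4 : ln (mu_int (fun x => expR (G x))) <= mu_int (Kf (fun y => dgrad f y) (fun _ => 0) 2)
  := core (fun y => dgrad f y) (fun _ => 0).
have h5 : mu_int (Kf (fun y => dgrad f y) (fun _ => 0) 2) <= 2 * gauss_width f.
  rewrite /gauss_width -mu_intZ; apply: mu_int_le => x.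
  apply: supcube_le => y; rewrite addr0; apply: ler_wpM2l; first by lra.
  exact: (supcube_ge (fun y => inner (dgrad f y) x) y).
rewrite h1 /relent; lra.
Qed.
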